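(* (1) Every cograph is equivalent to a fat intersection cograph. (2a) Every finite cograph is equivalent to an inner product cograph. (2b) Every finite cograph is equivalent to a polynomial cograph. (3) Every finite cograph is equivalent to a geometric cograph in $\mathbb{R}^d$ for some (sufficiently large) $d$.
   Context: A cograph is a function $\mathcal{C}:\mathcal{P}^{(2)}\to\mathcal{E}$, where $\mathcal{P}$ is a set (''points''), $\mathcal{P}^{(2)}$ is the set of unordered pairs of distinct points, and $\mathcal{E}$ is a set (''edges''); one writes $\mathcal{C}(P,Q)$ for the value on $\{P,Q\}$. It is finite if $\mathcal{P}$ is finite. Two cographs $\mathcal{C}$ on $\mathcal{P}$ and $\mathcal{C}'$ on $\mathcal{P}'$ are equivalent if there is a bijection $\varphi:\mathcal{P}\to\mathcal{P}'$ such that for all pairs of distinct points, $\mathcal{C}(P,Q)=\mathcal{C}(R,S)$ iff $\mathcal{C}'(\varphi P,\varphi Q)=\mathcal{C}'(\varphi R,\varphi S)$ (i.e. cographs are considered up to relabeling points and edges). A fat intersection cograph is given by a collection $\mathcal{P}$ of distinct sets (the points) and a collection $\mathcal{S}$ of sets closed under intersection and containing $U=\bigcup_{P\in\mathcal{P}}P$; its edge $\mathcal{C}(P,Q)$ is the smallest set in $\mathcal{S}$ containing $P\cap Q$. An inner product cograph has as points distinct vectors of a real inner product space, with $\mathcal{C}(P,Q)=(P,Q)$ the inner product. A polynomial cograph has as points distinct elements of $\mathbb{Z}$ (or of $\mathbb{Z}_m$ for some $m$), with $\mathcal{C}(P,Q)=f(P,Q)$ for a fixed symmetric polynomial $f$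 in two variables with integer coefficients. A geometric cograph in $\mathbb{R}^d$ has as points distinct points of $\mathbb{R}^d$, with $\mathcal{C}(P,Q)$ the Euclidean distance between $P$ and $Q$. *)

(* Defs.v *)
From HB Require Import structures.
From mathcomp Require Import all_boot all_order all_algebra.
From mathcomp Require Import Rstruct.
From mathcomp Require Import mpoly.
From Stdlib Require Import Rdefinitions.
Set Implicit Arguments. Unset Strict Implicit. Unset Printing Implicit Defensive.
Import Order.TTheory GRing.Theory Num.Theory.

(* A cograph with point type P and edge type E is a map on unordered pairs of
   distinct points.  We model it as a symmetric binary map [C : P -> P -> E];
   its values on the diagonal are irrelevant (never used). *)
Definition is_cograph (P E : Type) (C : P -> P -> E) : Prop :=
  forall x y, C x y = C y x.

(* [C] is equivalent, via the injective labelling [f : P -> Q], to the cograph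
   [C'] restricted to the point set [f(P)] (the image of f, a set of distinct
   elements of Q); f is then a bijection from P onto this point set. *)
Definition equiv_via (P E Q E' : Type) (C : P -> P -> E) (f : P -> Q)
    (C' : Q -> Q -> E') : Prop :=
  injective f /\
    forall p q r s, p <> q -> r <> s ->
      (C p q = C r s <-> C' (f p) (f q) = C' (f r) (f s)).

Definition setI_ (X : Type) (A B : X -> Prop) : X -> Prop := fun x => A x /\ B x.
Definition subset_ (X : Type) (A B : X -> Prop) : Prop := forall x, A x -> B x.

Definition fat_system (P X : Type) (pts : P -> (X -> Prop))
    (S : (X -> Prop) -> Prop) : Prop :=
  (forall A B, S A -> S B -> S (setI_ A B)) /\
  S (fun x => exists p, pts p x).

(* The edge of the fat intersection cograph on the points A, B: the smallest
   set of S containing A :&: B.  When such a smallest set exists it is the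
   intersection of all sets of S containing A :&: B, which is what we write
   here; its existence (membership in S) is required in [fat_intersection]. *)
Definition fat_edge (X : Type) (S : (X -> Prop) -> Prop) (A B : X -> Prop) : X -> Prop :=
  fun x => forall B', S B' -> subset_ (setI_ A B) B' -> B' x.

Definition fat_intersection (P X : Type) (pts : P -> (X -> Prop))
    (S : (X -> Prop) -> Prop) : Prop :=
  fat_system pts S /\
  forall p q, p <> q -> S (fat_edge S (pts p) (pts q)).

Local Open Scope ring_scope.

Definition is_inner_product (V : lmodType R) (ip : V -> V -> R) : Prop :=
  (forall u v, ip u v = ip v u) /\
  (forall (a : R) u v w, ip (a *: u + v) w = a * ip u w + ip v w) /\
  (forall u, u != 0 -> 0 < ip u u).

Definition val2 (T : Type) (x y : T) : 'I_2 -> T :=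
  fun i => if val i == 0%N then x else y.

Definition poly_cog_Z (f : {mpoly int[2]}) (x y : int) : int := f.@[val2 x y].

Definition poly_cog_Zm (m : nat) (f : {mpoly int[2]}) (x y : 'Z_m) : 'Z_m :=
  mmap (fun z : int => z%:~R) (val2 x y) f.

Definition euclid_dist (d : nat) (u v : 'rV[R]_d) : R :=
  Num.sqrt (\sum_(i < d) (u ord0 i - v ord0 i) ^+ 2).

(* Main.v *)
Require Import Defs.
From HB Require Import structures.
From mathcomp Require Import all_boot all_order all_algebra.
From mathcomp Require Import Rstruct.
From mathcomp Require Import mpoly.
From Stdlib Require Import Rdefinitions.
Import Order.TTheory GRing.Theory Num.Theory.
Local Open Scope ring_scope.

From mathcomp Require Import perm fingroup.
From mathcomp Require Import lra ring.
From Stdlib Require Import ClassicalEpsilon FunctionalExtensionality PropExtensionality Classical.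
Import Order.TTheory GRing.Theory Num.Theory.

Module PA.
Set Implicit Arguments. Unset Strict Implicit.
Local Close Scope ring_scope.

Definition asb (Q : Prop) : bool := if excluded_middle_informative Q then true else false.
Lemma asbP (Q : Prop) : reflect Q (asb Q).
Proof. rewrite /asb; case: excluded_middle_informative => H; by constructor. Qed.

Section Code.
Variables (P : finType) (E : Type) (C : P -> P -> E).
Hypothesis symC : is_cograph C.

Definition cpred (p q : P) : pred (P * P) :=
  fun w => (w.1 != w.2) && asb (C p q = C w.1 w.2).
Definition code (p q : P) : nat := find (cpred p q) (enum {: P * P}).

Lemma code_iff p q r s : p != q -> r != s ->
  (C p q = C r s <-> code p q = code r s).
Proof.
move=> pq rs; split.
  by move=> E1; apply: eq_find => w; rewrite /cpred E1.
move=> E1.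
have hp : has (cpred p q) (enum {: P * P}).
  apply/hasP; exists (p, q); first by rewrite mem_enum.
  by rewrite /cpred /= pq; apply/asbP.
have hr : has (cpred r s) (enum {: P * P}).
  apply/hasP; exists (r, s); first by rewrite mem_enum.
  by rewrite /cpred /= rs; apply/asbP.
have := nth_find (p, p) hp; have := nth_find (p, p) hr.
rewrite /code in E1; rewrite E1 /cpred => /andP[_ /asbP <-] /andP[_ /asbP ->] //.
Qed.

Lemma code_sym p q : p != q -> code p q = code q p.
Proof. by move=> pq; apply/code_iff => //; rewrite eq_sym. Qed.
End Code.

Section Part1.
Variables (P E : Type) (C : P -> P -> E).
Hypothesis symC : is_cograph C.
Definition pts1 (p : P) : P * P -> Prop := fun x => x.1 = p \/ x.2 = p.
Definition T1 (e : E) : P * P -> Prop := fun x => x.1 <> x.2 /\ C x.1 x.2 = e.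
Definition S1 (A : P * P -> Prop) : Prop :=
  (forall x, A x) \/ (exists e, forall x, A x <-> T1 e x) \/ (forall x, ~ A x).

Lemma S1_T e : S1 (T1 e).
Proof. right; left; exists e => x; tauto. Qed.

Lemma S1_sys : fat_system pts1 S1.
Proof.
split.
  move=> A B [HA|[[e HA]|HA]] [HB|[[e' HB]|HB]].
  - by left => x; split.
  - by right; left; exists e' => x; rewrite /setI_ -HB; split => //; case.
  - by right; right => x [_ b]; exact: (HB x b).
  - by right; left; exists e => x; rewrite /setI_ -HA; split => //; case.
  - case: (classic (e = e')) => [eq|ne].
      subst e'; by right; left; exists e => x; rewrite /setI_ HA HB; tauto.
    right; right => x [/HA [_ h1] /HB [_ h2]]; apply: ne; by rewrite -h1 -h2.
  - by right; right => x [_ b]; exact: (HB x b).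
  - by right; right => x [a _]; exact: (HA x a).
  - by right; right => x [a _]; exact: (HA x a).
  - by right; right => x [a _]; exact: (HA x a).
by left => x; exists x.1; left.
Qed.

Lemma fe_char p q : p <> q -> forall x,
  fat_edge S1 (pts1 p) (pts1 q) x <-> T1 (C p q) x.
Proof.
move=> pq x; split.
  move=> H; apply: H; first exact: S1_T.
  case=> a b [/= H1 H2]; rewrite /T1 /=.
  case: H1 => [h1|h1]; case: H2 => [h2|h2]; simpl in h1, h2.
  - by exfalso; apply: pq; rewrite -h1 -h2.
  - by rewrite h1 h2; split.
  - by rewrite h1 h2; split; [move=> e; apply: pq; rewrite e | exact: symC].
  - by exfalso; apply: pq; rewrite -h1 -h2.
move=> Hx B' [HB|[[e HB]|HB]] sub; first exact: HB.
  have : T1 e (p, q) by apply/HB/sub; split; [left|right].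
  by case=> _ /= he; apply/HB; rewrite -he.
by exfalso; apply: (HB (p, q)); apply: sub; split; [left|right].
Qed.

Lemma part1 : exists (X : Type) (pts : P -> (X -> Prop)) (S : (X -> Prop) -> Prop),
       fat_intersection pts S /\ equiv_via C pts (fat_edge S).
Proof.
exists (P * P)%type, pts1, S1; split.
  split; first exact: S1_sys.
  move=> p q pq; right; left; exists (C p q); exact: fe_char.
split.
  move=> p q H; have : pts1 q (p, p) by rewrite -H; left.
  by case.
move=> p q r s pq rs; split.
  move=> E1; apply: functional_extensionality => x; apply: propositional_extensionality.
  by rewrite fe_char // fe_char // E1.
move=> E1; have : fat_edge S1 (pts1 p) (pts1 q) (p, q) by apply/fe_char.
by rewrite E1 => /fe_char => /(_ rs) [].
Qed.
End Part1.

End PA.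
Import PA.

Module PB.
Local Open Scope ring_scope.

Section Part2a.
Variables (P : finType) (E : Type) (C : P -> P -> E).
Hypothesis symC : is_cograph C.

Definition hh (x : P * P) : R := (code C x.1 x.2)%:R.
Definition wv (p : P) (x : P * P) : R :=
  if x.1 == p then (if x.2 == p then 1 else hh x) else if x.2 == p then 1 else 0.
Definition ipw (u v : {ffun P * P -> R}) : R := \sum_x u x * v x.

Lemma wv_prod p q x : p != q -> wv p x * wv q x =
  (if x == (p, q) then hh x else 0) + (if x == (q, p) then hh x else 0).
Proof.
move=> pq; have qp : q != p by rewrite eq_sym.
case: x => a b; rewrite /wv /= !xpair_eqE.
have [->|ap] := eqVneq a p; have [->|bp] := eqVneq b p;
  rewrite ?eqxx ?(negbTE pq) ?(negbTE qp) /=;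
  try (have [->|aq] := eqVneq a q); try (have [->|bq] := eqVneq b q);
  rewrite ?eqxx ?(negbTE pq) ?(negbTE qp) ?(negbTE ap) ?(negbTE bp) ?(negbTE aq) ?(negbTE bq) /=;
  rewrite ?mulr0 ?mul0r ?mulr1 ?mul1r ?addr0 ?add0r //.
Qed.

Lemma sum_ind (T : finType) (a : T) (F : T -> R) :
  \sum_x (if x == a then F x else 0) = F a.
Proof. by rewrite -big_mkcond big_pred1_eq. Qed.

Lemma sumenum (T : finType) (F : T -> R) :
  \sum_(i < #|T|) F (enum_val i) = \sum_x F x.
Proof. by rewrite -(big_enum_val F). Qed.

Definition ipr n (u v : 'rV[R]_n) : R := \sum_i u ord0 i * v ord0 i.
Arguments ipr {n}.

Definition fw (p : P) : 'rV[R]_#|{: P * P}| := \row_i wv p (enum_val i).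

Lemma wsum p q : p != q -> \sum_x wv p x * wv q x = (2 * code C p q)%:R.
Proof.
move=> pq.
under eq_bigr => x _ do rewrite (wv_prod _ _ _ pq).
rewrite big_split /= !sum_ind /hh /= (code_sym symC (q:=p)) 1?eq_sym //.
by rewrite natrM -mulr2n mulr_natl.
Qed.

Lemma ipw_val p q : p != q -> ipr (fw p) (fw q) = (2 * code C p q)%:R.
Proof.
move=> pq; rewrite /ipr.
under eq_bigr => i _ do rewrite !mxE.
by rewrite (@sumenum _ (fun x => wv p x * wv q x)) wsum.
Qed.

Lemma ipr_ip n : is_inner_product (@ipr n).
Proof.
split; first by move=> u v; apply: eq_bigr => x _; rewrite mulrC.
split.
  move=> a u v w; rewrite /ipr mulr_sumr -big_split /=; apply: eq_bigr => x _.
  by rewrite !mxE mulrDl mulrA.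
move=> u nz.
have [x ux] : exists x, u ord0 x != 0.
  apply/existsP; apply: contraR nz; rewrite negb_exists => /forallP H.
  apply/eqP/matrixP => i j; rewrite (ord1 i) mxE; apply/eqP; move: (H j); by rewrite negbK.
rewrite /ipr (bigD1 x) //=.
apply: ltr_pwDl; first by rewrite -expr2 exprn_even_gt0.
by apply: sumr_ge0 => y _; rewrite -expr2 sqr_ge0.
Qed.

Lemma part2a : exists (V : lmodType R) (ip : V -> V -> R) (f : P -> V),
       is_inner_product ip /\ equiv_via C f ip.
Proof.
exists 'rV[R]_#|{: P * P}|, (@ipr _), fw.
split; first exact: ipr_ip.
split.
  move=> p q H; apply/eqP; apply: contraT => qp.
  have := congr1 (fun u : 'rV[R]_#|{: P * P}| => u ord0 (enum_rank (p, p))) H.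
  rewrite /= !mxE enum_rankK /wv /= eqxx (negbTE qp) => /eqP.
  by rewrite oner_eq0.
move=> p q r s /eqP pq /eqP rs.
rewrite (@code_iff _ _ C _ _ _ _ pq rs) !ipw_val //.
split; first by move=> ->.
by move/eqP; rewrite eqr_nat eqn_pmul2l // => /eqP.
Qed.
End Part2a.

End PB.
Import PB.

Module PC.
Local Open Scope ring_scope.

Arguments wv {P E} C p x.
Arguments wsum {P E C} symC {p q}.
Section Part3.
Variables (P : finType) (E : Type) (C : P -> P -> E).
Hypothesis symC : is_cograph C.

Notation T3 := ((P * P) + P)%type.
Definition nw (p : P) : R := \sum_x wv C p x ^+ 2.
Definition N3 : R := \sum_p nw p.
Definition cc (p : P) : R := Num.sqrt (N3 - nw p).
Definition vv (p : P) (t : T3) : R :=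
  match t with inl x => wv C p x | inr a => if a == p then cc p else 0 end.
Definition f3 (p : P) : 'rV[R]_#|{: T3}| := \row_i vv p (enum_val i).

Lemma nw_ge0 p : 0 <= nw p.
Proof. by apply: sumr_ge0 => x _; rewrite sqr_ge0. Qed.

Lemma cc2 p : cc p ^+ 2 = N3 - nw p.
Proof.
rewrite sqr_sqrtr // subr_ge0 /N3 (bigD1 p) //= lerDl.
by apply: sumr_ge0 => x _; apply: nw_ge0.
Qed.

Lemma dist2 p q : p != q ->
  \sum_i (f3 p ord0 i - f3 q ord0 i) ^+ 2 = 2 * N3 - (4 * code C p q)%:R.
Proof.
move=> pq.
under eq_bigr => i _ do rewrite !mxE.
rewrite (@sumenum _ (fun t => (vv p t - vv q t) ^+ 2)) big_sumType /=.
have e1 : \sum_x (wv C p x - wv C q x) ^+ 2 =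
    nw p + nw q - 2 * \sum_x wv C p x * wv C q x.
  rewrite /nw mulr_sumr -big_split -sumrB /=; apply: eq_bigr => x _.
  by rewrite sqrrB; lra.
have e2 : \sum_a (vv p (inr a) - vv q (inr a)) ^+ 2 = cc p ^+ 2 + cc q ^+ 2.
  rewrite -(@sum_ind _ p (fun _ => cc p ^+ 2)) -(@sum_ind _ q (fun _ => cc q ^+ 2)).
  rewrite -big_split /=; apply: eq_bigr => a _ /=.
  have qp : q != p by rewrite eq_sym.
  case: (eqVneq a p) => [eap|ap]; first by subst a; rewrite ?eqxx (negbTE pq) subr0 addr0.
  case: (eqVneq a q) => [eaq|aq]; first by subst a; rewrite ?eqxx ?(negbTE qp) ?sub0r ?sqrrN ?add0r.
  by rewrite ?(negbTE ap) ?(negbTE aq) subr0 expr0n addr0.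
rewrite e1 e2 (wsum symC pq) !cc2 natrM natrM.
have -> : (4%:R : R) = 2 * 2 by rewrite -natrM.
lra.
Qed.
End Part3.

Section Part3b.
Variables (P : finType) (E : Type) (C : P -> P -> E).
Hypothesis symC : is_cograph C.

Lemma part3 : exists (d : nat) (f : P -> 'rV[R]_d), equiv_via C f (@euclid_dist d).
Proof.
exists #|{: ((P * P) + P)%type}|, (@f3 P E C); split.
  move=> p q H; apply/eqP; apply: contraT => qp.
  have := congr1 (fun u : 'rV[R]_#|{: ((P * P) + P)%type}| => u ord0 (enum_rank (inl (p, p) : ((P * P) + P)%type))) H.
  rewrite /= !mxE enum_rankK /= /wv /= eqxx (negbTE qp) => /eqP.
  by rewrite oner_eq0.
move=> p q r s /eqP pq /eqP rs.
rewrite (@code_iff _ _ C _ _ _ _ pq rs).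
split; first by move=> E1; rewrite /euclid_dist !(@dist2 P E C symC) // E1.
rewrite /euclid_dist => /eqP; rewrite eqr_sqrt; first last.
- by apply: sumr_ge0 => i _; rewrite sqr_ge0.
- by apply: sumr_ge0 => i _; rewrite sqr_ge0.
rewrite !(@dist2 P E C symC) // => /eqP /addrI /oppr_inj /eqP.
by rewrite eqr_nat eqn_pmul2l // => /eqP.
Qed.
End Part3b.

End PC.
Import PC.

Module PD.
Local Open Scope ring_scope.

Definition i0 : 'I_2 := @Ordinal 2 0 isT.
Definition i1 : 'I_2 := @Ordinal 2 1 isT.

Lemma msymXi (s : 'S_2) (i : 'I_2) : msym s ('X_i : {mpoly int[2]}) = 'X_(s i).
Proof. by rewrite /msym mmapX mmap1U. Qed.

Lemma msymCi (s : 'S_2) (c : int) : msym s (c%:MP : {mpoly int[2]}) = c%:MP.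
Proof. by rewrite /msym mmapC. Qed.

Lemma perm2 (s : 'S_2) : (s i0 = i0 /\ s i1 = i1) \/ (s i0 = i1 /\ s i1 = i0).
Proof.
have ne : s i0 != s i1 by rewrite (inj_eq perm_inj).
have two : forall j : 'I_2, j = i0 \/ j = i1.
  by case=> [[|[|k]] Hk] //; [left|right]; apply: val_inj.
case: (two (s i0)) => h0; case: (two (s i1)) => h1; rewrite h0 h1 in ne *; by [left|right|rewrite eqxx in ne].
Qed.

Lemma val2_0 (T : Type) (x y : T) : val2 x y i0 = x. Proof. by []. Qed.
Lemma val2_1 (T : Type) (x y : T) : val2 x y i1 = y. Proof. by []. Qed.

Section Part2b.
Variables (P : finType) (E : Type) (C : P -> P -> E).
Hypothesis symC : is_cograph C.

Definition aa (p : P) : int := (enum_rank p : nat)%:Z.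
Definition Lx (i : 'I_2) (s : P) : {mpoly int[2]} :=
  \prod_(r | r != s) ('X_i - (aa r)%:MP).
Definition DD (s : P) : int := \prod_(r | r != s) (aa s - aa r).
Definition cf (s t : P) : int :=
  (code C s t)%:Z * \prod_(r | (r != s) && (r != t)) DD r.
Definition GG : {mpoly int[2]} :=
  \sum_(w : P * P) (cf w.1 w.2)%:MP * (Lx i0 w.1 * Lx i1 w.2 + Lx i0 w.2 * Lx i1 w.1).

Lemma aa_inj : injective aa.
Proof. move=> p q [] /val_inj; exact: enum_rank_inj. Qed.

Lemma msymLx (s : 'S_2) i p : msym s (Lx i p) = Lx (s i) p.
Proof.
rewrite /Lx rmorph_prod; apply: eq_bigr => r _.
by rewrite rmorphB /= msymXi msymCi.
Qed.

Lemma msymCX (s : 'S_2) (c : int) (X : {mpoly int[2]}) :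
  msym s (c%:MP * X) = c%:MP * msym s X.
Proof. by rewrite rmorphM /= msymCi. Qed.

Lemma msymLL (s : 'S_2) i j p q :
  msym s (Lx i p * Lx j q) = Lx (s i) p * Lx (s j) q.
Proof. by rewrite rmorphM /= !msymLx. Qed.

Lemma GG_sym : GG \is symmetric.
Proof.
apply/issymP => s; rewrite /GG rmorph_sum; apply: eq_bigr => w _.
rewrite /= msymCX rmorphD /= !msymLL.
case: (perm2 s) => [[-> ->]|[-> ->]] //.
by congr (_ * _); rewrite addrC [Lx i1 w.1 * _]mulrC [Lx i1 w.2 * _]mulrC.
Qed.

Lemma evalLx u t s (v := val2 (aa u) (aa t)) (i : 'I_2) :
  (Lx i s).@[v] = \prod_(r | r != s) (v i - aa r).
Proof.
rewrite /Lx rmorph_prod; apply: eq_bigr => r _.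
by rewrite rmorphB /= mevalXU mevalC.
Qed.

Lemma prod_at (z : P) s : \prod_(r | r != s) (aa z - aa r) = if s == z then DD z else 0.
Proof.
case: eqP => [->|/eqP sz] //.
by rewrite (bigD1 z) 1?eq_sym //= subrr mul0r.
Qed.

Lemma DD_neq0 z : DD z != 0.
Proof.
rewrite /DD; apply/prodf_neq0 => r rz; rewrite subr_eq0.
by apply/eqP => /aa_inj e; move: rz; rewrite e eqxx.
Qed.

Definition KK : int := \prod_r DD r.

Lemma KK_neq0 : KK != 0.
Proof. by apply/prodf_neq0 => r _; exact: DD_neq0. Qed.

Lemma prodK u t : u != t ->
  KK = DD u * DD t * \prod_(r | (r != u) && (r != t)) DD r.
Proof.
move=> ut; rewrite /KK (bigD1 u) //= (bigD1 t) 1?eq_sym //= mulrA.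
congr (_ * _); apply: eq_bigl => r /=; case: (r != u); case: (r != t).
Qed.

Lemma mevalCX (v : 'I_2 -> int) (c : int) (X : {mpoly int[2]}) :
  (c%:MP * X).@[v] = c * X.@[v].
Proof. by rewrite mevalM mevalC. Qed.

Lemma mevalLL (v : 'I_2 -> int) (X Y : {mpoly int[2]}) :
  (X * Y).@[v] = X.@[v] * Y.@[v].
Proof. by rewrite mevalM. Qed.

Lemma sum_indZ (T : finType) (a : T) (F : T -> int) :
  \sum_x (if x == a then F x else 0) = F a.
Proof. by rewrite -big_mkcond big_pred1_eq. Qed.

Lemma prod_swap u t : \prod_(r | (r != t) && (r != u)) DD r = \prod_(r | (r != u) && (r != t)) DD r.
Proof. by apply: eq_bigl => r; rewrite andbC. Qed.

Lemma GG_val u t : u != t ->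
  poly_cog_Z GG (aa u) (aa t) = (code C u t)%:Z * (2 * KK).
Proof.
move=> ut; rewrite /poly_cog_Z /GG rmorph_sum /=.
have tu : t != u by rewrite eq_sym.
under eq_bigr => w _ do rewrite mevalCX rmorphD /= !mevalLL !evalLx
   val2_0 val2_1 !prod_at.
rewrite (eq_bigr (fun w : P * P =>
    (if w == (u, t) then cf u t * (DD u * DD t) else 0) +
    (if w == (t, u) then cf t u * (DD u * DD t) else 0))); last first.
  case=> a b _ /=; rewrite !xpair_eqE.
  case: (eqVneq a u) => [?|au]; first subst a;
  (case: (eqVneq b u) => [?|bu]; first subst b);
  (try case: (eqVneq a t) => [?|a_t]; try subst a);
  (try case: (eqVneq b t) => [?|bt]; try subst b);
  rewrite ?eqxx; try rewrite (negbTE ut); try rewrite (negbTE tu);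
  try rewrite (negbTE au); try rewrite (negbTE bu); try rewrite (negbTE a_t);
  try rewrite (negbTE bt); rewrite /= ?mulr0 ?mul0r ?addr0 ?add0r ?mulr1 //;
  try (by rewrite mulrC).
all: try (by ring).

rewrite big_split /= !sum_indZ /cf (code_sym symC tu).
rewrite (prod_swap u t).
rewrite (prodK _ _ ut); ring.
Qed.
Lemma part2b : exists g : {mpoly int[2]}, g \is symmetric /\
       ((exists f : P -> int, equiv_via C f (poly_cog_Z g)) \/
        (exists (m : nat) (f : P -> 'Z_m),
           (1 < m)%nat /\ equiv_via C f (poly_cog_Zm g))).
Proof.
exists GG; split; first exact: GG_sym.
left; exists aa; split; first exact: aa_inj.
move=> p q r s /eqP pq /eqP rs.
rewrite (@code_iff _ _ C _ _ _ _ pq rs) !GG_val //.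
split; first by move=> ->.
have nz : 2 * KK != 0 by rewrite mulf_neq0 // KK_neq0.
by move/(mulIf nz) => [].
Qed.
End Part2b.

End PD.
Import PD.

Theorem theorem1p1 :
  (* (1) every cograph is equivalent to a fat intersection cograph *)
  (forall (P E : Type) (C : P -> P -> E), is_cograph C ->
     exists (X : Type) (pts : P -> (X -> Prop)) (S : (X -> Prop) -> Prop),
       fat_intersection pts S /\ equiv_via C pts (fat_edge S)) /\
  (* (2a) every finite cograph is equivalent to an inner product cograph *)
  (forall (P : finType) (E : Type) (C : P -> P -> E), is_cograph C ->
     exists (V : lmodType R) (ip : V -> V -> R) (f : P -> V),
       is_inner_product ip /\ equiv_via C f ip) /\
  (* (2b) every finite cograph is equivalent to a polynomial cograph *)
  (forall (P : finType) (E : Type) (C : P -> P -> E), is_cograph C ->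
     exists g : {mpoly int[2]}, g \is symmetric /\
       ((exists f : P -> int, equiv_via C f (poly_cog_Z g)) \/
        (exists (m : nat) (f : P -> 'Z_m),
           (1 < m)%nat /\ equiv_via C f (poly_cog_Zm g)))) /\
  (* (3) every finite cograph is equivalent to a geometric cograph in R^d *)
  (forall (P : finType) (E : Type) (C : P -> P -> E), is_cograph C ->
     exists (d : nat) (f : P -> 'rV[R]_d), equiv_via C f (@euclid_dist d)).
Proof.
split; first by move=> P E C symC; apply: part1.
split; first by move=> P E C symC; apply: part2a.
split; first by move=> P E C symC; apply: part2b.
by move=> P E C symC; apply: part3.
Qed.
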